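(* Let $\kappa>0$ be sufficiently small and define $F_1:\mathbb{R}\to\mathbb{R}$ by $F_1(0)=0$, $F_1(s)=-\frac12 s^2\log s^2$ for $0<|s|<\kappa$, and $F_1(s)=-\frac12 s^2(\log\kappa^2+3)+2\kappa|s|-\frac{\kappa^2}{2}$ for $|s|\ge\kappa$. Then $F_1$ is an N-function, and both $F_1$ and its conjugate function $\tilde F_1$ satisfy the $\Delta_2$-condition.
   Context: A continuous $\Phi:\mathbb{R}\to[0,\infty)$ is an N-function if it is convex, even, $\Phi(t)=0\iff t=0$, $\lim_{t\to0}\Phi(t)/t=0$ and $\lim_{t\to\infty}\Phi(t)/t=+\infty$. $\Phi$ satisfies the $\Delta_2$-condition if there is $k>0$ with $\Phi(2t)\le k\Phi(t)$ for all $t\ge0$. The conjugate is $\tilde\Phi(s)=\max_{t\ge0}\{st-\Phi(t)\}$, $s\ge 0$. *)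

(* Defs.v *)
From HB Require Import structures.
From mathcomp Require Import all_boot all_order all_algebra.
From mathcomp Require Import all_classical all_reals all_analysis.
Set Implicit Arguments. Unset Strict Implicit. Unset Printing Implicit Defensive.
Import Order.TTheory GRing.Theory Num.Theory.
Import numFieldNormedType.Exports.
Local Open Scope classical_set_scope.
Local Open Scope ring_scope.

Definition convexR {R : realType} (Phi : R -> R) : Prop :=
  forall (x y l : R), 0 <= l -> l <= 1 ->
    Phi (l * x + (1 - l) * y) <= l * Phi x + (1 - l) * Phi y.

Definition N_function {R : realType} (Phi : R -> R) : Prop :=
  continuous Phi /\
  (forall t, 0 <= Phi t) /\
  convexR Phi /\
  (forall t, Phi (- t) = Phi t) /\
  (forall t, Phi t = 0 <-> t = 0) /\
  ((fun t => Phi t / t) @ 0^' --> (0 : R)) /\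
  ((fun t => Phi t / t) @ +oo --> +oo).

Definition Delta2 {R : realType} (Phi : R -> R) : Prop :=
  exists k : R, 0 < k /\ forall t, 0 <= t -> Phi (2 * t) <= k * Phi t.

(* Conjugate function: Phi~(s) = max_{t >= 0} (s t - Phi t), written as the
   supremum (the max exists for N-functions). Only used for s >= 0. *)
Definition conjugate {R : realType} (Phi : R -> R) (s : R) : R :=
  sup [set s * t - Phi t | t in [set t : R | 0 <= t]].

Definition F1 {R : realType} (kappa : R) (s : R) : R :=
  if s == 0 then 0
  else if `|s| < kappa then - (1/2) * s ^+ 2 * ln (s ^+ 2)
  else - (1/2) * s ^+ 2 * (ln (kappa ^+ 2) + 3) + 2 * kappa * `|s| - kappa ^+ 2 / 2.

(* Main.v *)
Require Import Defs.
From HB Require Import structures.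
From mathcomp Require Import all_boot all_order all_algebra.
From mathcomp Require Import all_classical all_reals all_analysis.
From mathcomp Require Import ring lra.
Import Order.TTheory GRing.Theory Num.Theory.
Import numFieldNormedType.Exports.
Local Open Scope classical_set_scope.
Local Open Scope ring_scope.

Lemma ln_le_sub1 {R : realType} (x : R) : 0 < x -> ln x <= x - 1.
Proof.
move=> x0; have := expR_ge1Dx (ln x); rewrite lnK ?posrE // => h. lra.
Qed.

Lemma ln_mono {R : realType} (x y : R) : 0 < x -> x <= y -> ln x <= ln y.
Proof. move=> x0 xy; rewrite ler_ln ?posrE //; exact: lt_le_trans xy. Qed.

Lemma lnMx {R : realType} (x y : R) : 0 < x -> 0 < y -> ln (x * y) = ln x + ln y.
Proof. by move=> x0 y0; rewrite lnM ?posrE. Qed.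

Lemma ln_diff {R : realType} (x p : R) : 0 < x -> 0 < p -> p * (ln x - ln p) <= x - p.
Proof.
move=> x0 p0.
have h := ln_le_sub1 _ (divr_gt0 x0 p0).
rewrite ln_div ?posrE // in h.
have := ler_wpM2l (ltW p0) h.
have e : p * (x / p - 1) = x - p.
  by field; exact: lt0r_neq0.
rewrite e. done.
Qed.
Lemma dummy : True.
Proof.
done. Qed.

Definition hh {R : realType} (s : R) := - s^+2 * ln s.
Definition hd {R : realType} (s : R) := - 2 * s * ln s - s.
Definition aa {R : realType} (k : R) := - ln k - 3/2.
Definition qq {R : realType} (k s : R) := aa k * s^+2 + 2*k*s - k^+2/2.
Definition qd {R : realType} (k s : R) := 2 * aa k * s + 2*k.

Lemma inner_tan {R : realType} (x p : R) : 0 < x -> 0 < p -> ln x <= -2 -> ln p <= -2 ->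
  hh p + hd p * (x - p) <= hh x.
Proof.
move=> x0 p0 lx lp; have D := ln_diff _ _ x0 p0; rewrite /hh /hd.
case: (leP p x) => px.
- have F1 : (x-p)^+2 * (ln x + 2) <= 0.
    by apply: mulr_ge0_le0; [exact: sqr_ge0 | lra].
  have F2 : (2*x-p) * (p * (ln x - ln p)) <= (2*x - p)*(x-p).
    by apply: ler_wpM2l => //; lra.
  nra.
- have F1 : p * ((x-p)^+2 * (ln p + 2)) <= 0.
    by apply: mulr_ge0_le0; [lra | apply: mulr_ge0_le0; [exact: sqr_ge0 | lra]].
  have F2 : x^+2 * (p * (ln x - ln p)) <= x^+2 * (x-p).
    by apply: ler_wpM2l => //; exact: sqr_ge0.
  have F3 : (x-p)^+2 * (x-p) <= 0.
    by apply: mulr_ge0_le0; [exact: sqr_ge0 | lra].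
  suff : 0 <= p * (- x ^+ 2 * ln x - (- p ^+ 2 * ln p + (- 2 * p * ln p - p) * (x - p))).
    rewrite pmulr_rge0 //; lra.
  nra.
Qed.

Lemma zero_tan {R : realType} (p : R) : 0 < p -> ln p <= -1 -> hh p + hd p * (0 - p) <= 0.
Proof. move=> p0 lp; rewrite /hh /hd. have : 0 <= p^+2 by exact: sqr_ge0. nra. Qed.

Lemma quad_tan {R : realType} (k x p : R) : 0 <= aa k -> qq k p + qd k p * (x - p) <= qq k x.
Proof. move=> a0; rewrite /qq /qd. have : 0 <= aa k * (x - p)^+2 by apply: mulr_ge0 => //; exact: sqr_ge0. nra. Qed.

Lemma hq_k {R : realType} (k : R) : 0 < k -> hh k = qq k k /\ hd k = qd k k.
Proof. move=> k0; rewrite /hh /qq /hd /qd /aa; by split; field. Qed.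

Definition gg {R : realType} (k s : R) := if s == 0 then 0 else if s < k then hh s else qq k s.
Definition gd {R : realType} (k s : R) := if s == 0 then 0 else if s < k then hd s else qd k s.

Lemma lnk_le {R : realType} (k s : R) : ln k <= -6 -> 0 < s -> s <= k -> ln s <= -6.
Proof. move=> hL s0 sk; apply: le_trans hL; exact: ln_mono. Qed.

Lemma aa_ge {R : realType} (k : R) : ln k <= -6 -> 9/2 <= aa k.
Proof. rewrite /aa => h; lra. Qed.

Lemma gg_ge0 {R : realType} (k s : R) : 0 < k -> ln k <= -6 -> 0 <= s -> 0 <= gg k s.
Proof.
move=> k0 hL s0; rewrite /gg; case: eqP => // /eqP sn0.
have s0' : 0 < s by rewrite lt_neqAle eq_sym sn0 s0.
case: ltP => sk.
- have := lnk_le _ _ hL s0' (ltW sk); rewrite /hh => hl.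
  have : 0 < s^+2 by exact: exprn_gt0. nra.
- have := aa_ge _ hL; rewrite /qq => ha.
  have : 0 <= s^+2 by exact: sqr_ge0. nra.
Qed.

Lemma gd_ge0 {R : realType} (k s : R) : 0 < k -> ln k <= -6 -> 0 <= s -> 0 <= gd k s.
Proof.
move=> k0 hL s0; rewrite /gd; case: eqP => // /eqP sn0.
have s0' : 0 < s by rewrite lt_neqAle eq_sym sn0 s0.
case: ltP => sk.
- have := lnk_le _ _ hL s0' (ltW sk); rewrite /hd => hl. nra.
- have := aa_ge _ hL; rewrite /qd => ha. nra.
Qed.

Lemma TL {R : realType} (k x p : R) : 0 < k -> ln k <= -6 -> 0 <= x -> 0 <= p ->
  gg k p + gd k p * (x - p) <= gg k x.
Proof.
move=> k0 hL x0 p0.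
have ha := aa_ge _ hL. have a0 : 0 <= aa k by lra.
have [hk1 hk2] := hq_k _ k0.
have lnle (s : R) : 0 < s -> s <= k -> ln s <= -6 := fun a b => lnk_le _ _ hL a b.
have g0 : gg k 0 = 0 by rewrite /gg eqxx.
have d0 : gd k 0 = 0 by rewrite /gd eqxx.
have [pe|pn0] := eqVneq p 0.
  by rewrite pe g0 d0 mul0r addr0; exact: gg_ge0.
have pp : 0 < p by rewrite lt_neqAle eq_sym pn0 p0.
have -> : gg k p = (if p < k then hh p else qq k p) by rewrite /gg (negbTE pn0).
have -> : gd k p = (if p < k then hd p else qd k p) by rewrite /gd (negbTE pn0).
have lk := lnle k k0 (lexx k).
have [xe|xn0] := eqVneq x 0.
  rewrite xe g0; case: ltP => pk.
  - apply: zero_tan => //; have := lnle p pp (ltW pk); lra.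
  - rewrite /qq /qd. have : 0 <= aa k * p^+2 by apply: mulr_ge0 => //; exact: sqr_ge0.
    have : 0 <= k^+2 by exact: sqr_ge0. nra.
have xp : 0 < x by rewrite lt_neqAle eq_sym xn0 x0.
have -> : gg k x = (if x < k then hh x else qq k x) by rewrite /gg (negbTE xn0).
case: (ltP p k) => pk; case: (ltP x k) => xk.
- apply: inner_tan => //; [have := lnle x xp (ltW xk); lra | have := lnle p pp (ltW pk); lra].
- have T1 := quad_tan k x k a0.
  have lpk : ln p <= -2 by have := lnle p pp (ltW pk); lra.
  have T2 := inner_tan _ _ k0 pp (ltac:(lra)) lpk.
  have T3 := inner_tan _ _ pp k0 lpk (ltac:(lra)).
  have M : hd p <= hd k.
    have : (hd p - hd k) * (k - p) <= 0 by nra.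
    rewrite pmulr_lle0; [lra | lra].
  have : 0 <= (hd k - hd p) * (x - k) by apply: mulr_ge0; lra.
  rewrite -hk1 -hk2 in T1. nra.
- have lxk : ln x <= -2 by have := lnle x xp (ltW xk); lra.
  have T1 := inner_tan _ _ xp k0 lxk (ltac:(lra)).
  have T2 := quad_tan k k p a0.
  have M : qd k k <= qd k p by rewrite /qd; nra.
  have : 0 <= (qd k p - qd k k) * (k - x) by apply: mulr_ge0; lra.
  rewrite hk1 hk2 in T1. nra.
- exact: quad_tan.
Qed.

Arguments TL {R k x p}.
Arguments gd_ge0 {R k s}.
Arguments gg_ge0 {R k s}.

Lemma F1_gg {R : realType} (k s : R) : 0 < k -> F1 k s = gg k `|s|.
Proof.
move=> k0; rewrite /F1 /gg normr_eq0; case: eqP => // /eqP s0.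
have ps : 0 < `|s| by rewrite normr_gt0.
have e : s^+2 = `|s|^+2 by rewrite real_normK // num_real.
rewrite e !lnXn // /hh /qq /aa.
by case: ltP => _; rewrite !mulr2n; field.
Qed.

Definition sl {R : realType} (k P : R) := (if 0 <= P then 1 else -1) * gd k `|P|.

Lemma nrm_bounds {R : realType} (z : R) : - `|z| <= z /\ z <= `|z|.
Proof. split; last exact: ler_norm. have := ler_norm (- z); rewrite normrN; lra. Qed.

Lemma supp {R : realType} (k P y : R) : 0 < k -> ln k <= -6 ->
  F1 k P + sl k P * (y - P) <= F1 k y.
Proof.
move=> k0 hL; rewrite !F1_gg //.
have T := TL k0 hL (normr_ge0 y) (normr_ge0 P).
have G := gd_ge0 k0 hL (normr_ge0 P).
have [h1 h2] := nrm_bounds y.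
suff : sl k P * (y - P) <= gd k `|P| * (`|y| - `|P|) by lra.
rewrite /sl; case: (leP 0 P) => hP.
- rewrite (ger0_norm hP) mul1r in G *. have : 0 <= gd k P * (`|y| - y) by apply: mulr_ge0 => //; lra. nra.
- rewrite (ltr0_norm hP) in G *. have : 0 <= gd k (- P) * (`|y| + y) by apply: mulr_ge0 => //; lra. nra.
Qed.

Lemma sl_norm {R : realType} (k P : R) : 0 < k -> ln k <= -6 -> `|sl k P| = gd k `|P|.
Proof.
move=> k0 hL; rewrite /sl normrM (ger0_norm (gd_ge0 k0 hL (normr_ge0 P))).
by case: ifP => _; rewrite ?normrN normr1 mul1r.
Qed.

Lemma gd_mono {R : realType} (k a b : R) : 0 < k -> ln k <= -6 -> 0 <= a -> a <= b ->
  gd k a <= gd k b.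
Proof.
move=> k0 hL a0 ab.
have b0 : 0 <= b by exact: le_trans ab.
have T1 := TL k0 hL b0 a0. have T2 := TL k0 hL a0 b0.
case: (ltP a b) => h; last by have -> : a = b by apply/eqP; rewrite eq_le ab h.
have : (gd k a - gd k b) * (b - a) <= 0 by nra.
rewrite pmulr_lle0; [lra | lra].
Qed.

Lemma F1_cont {R : realType} (k : R) : 0 < k -> ln k <= -6 -> continuous (F1 k).
Proof.
move=> k0 hL P; apply/cvgrPdist_le => e e0.
set B := gd k (`|P| + 1).
have B0 : 0 <= B by apply: gd_ge0 => //; apply: addr_ge0.
have d0 : 0 < Num.min 1 (e/(B+1)) by rewrite lt_min ltr01 /= divr_gt0 //; lra.
near=> y.
have hy : `|P - y| < Num.min 1 (e/(B+1)).
  by near: y; exists (Num.min 1 (e/(B+1))).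
have [hy1 hy2] : `|P - y| < 1 /\ `|P - y| < e/(B+1) by move: hy; rewrite lt_min => /andP.
have yb : `|y| <= `|P| + 1.
  move: hy1; rewrite ltr_norml => /andP [a b].
  have [c d] := nrm_bounds P. rewrite ler_norml; apply/andP; split; lra.
have z0 : 0 <= `|P - y| := normr_ge0 _.
have zb : B * `|P - y| <= e.
  have : (B + 1) * `|P - y| <= (B+1) * (e / (B+1)) by apply: ler_wpM2l; lra.
  rewrite mulrCA divff ?mulr1; last by apply: lt0r_neq0; lra.
  nra.
have S1 := supp k P y k0 hL.
have S2 := supp k y P k0 hL.
have n1 := nrm_bounds (sl k P * (y - P)).
have n2 := nrm_bounds (sl k y * (P - y)).
rewrite normrM sl_norm // distrC in n1.
rewrite normrM sl_norm // in n2.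
have g1 : gd k `|P| <= B by apply: gd_mono => //; lra.
have g2 : gd k `|y| <= B by apply: gd_mono => //.
have m1 : gd k `|P| * `|P - y| <= B * `|P - y| by apply: ler_wpM2r.
have m2 : gd k `|y| * `|P - y| <= B * `|P - y| by apply: ler_wpM2r.
rewrite ler_norml; apply/andP; split; lra.
Unshelve. all: by end_near.
Qed.

Lemma test0 {R : realType} (f : R -> R) (Q : R -> Prop) :
  (exists2 d : R, 0 < d & forall t, t != 0 -> `|t| < d -> Q t) -> \forall t \near 0^', Q t.
Proof.
move=> [d d0 H]; apply: filterS (dnbhs_ball 0 d0) => t [hb /= ht].
apply: H; first by apply/eqP.
by move: hb; rewrite /ball /= sub0r normrN.
Qed.

Lemma testoo {R : realType} (Q : R -> Prop) :
  (exists M : R, forall t, M < t -> Q t) -> \forall t \near +oo, Q t.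
Proof.
move=> [M H]; exists M; split; first exact: num_real. move=> x hx; exact: H.
Qed.

Lemma plnp {R : realType} (p N : R) : 0 < p -> 0 < N -> - p * ln p <= N^-1 + p * ln N.
Proof.
move=> p0 N0.
have pN : 0 < p * N by exact: mulr_gt0.
have ipN : 0 < (p * N)^-1 by rewrite invr_gt0.
have h := ln_le_sub1 _ ipN.
rewrite lnV ?posrE // lnM ?posrE // in h.
have := ler_wpM2l (ltW p0) h.
have -> : p * ((p * N)^-1 - 1) = N^-1 - p by field; apply/andP; split; apply: lt0r_neq0.
lra.
Qed.

Lemma F1_le_gd {R : realType} (k t : R) : 0 < k -> ln k <= -6 -> F1 k t <= gd k `|t| * `|t|.
Proof.
move=> k0 hL; have S := supp k t 0 k0 hL.
have e0 : F1 k 0 = 0 by rewrite /F1 eqxx.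
rewrite e0 in S.
have [_ n] := nrm_bounds (sl k t * t).
rewrite normrM sl_norm // in n. lra.
Qed.

Lemma gg_gt0 {R : realType} (k s : R) : 0 < k -> ln k <= -6 -> 0 < s -> 0 < gg k s.
Proof.
move=> k0 hL s0; rewrite /gg (negbTE (lt0r_neq0 s0)).
case: (ltP s k) => sk.
- have := lnk_le _ _ hL s0 (ltW sk); rewrite /hh => hl.
  have : 0 < s^+2 by exact: exprn_gt0. nra.
- have := aa_ge _ hL; rewrite /qq => ha.
  have : 0 <= s^+2 by exact: sqr_ge0. nra.
Qed.

Lemma F1_lim0 {R : realType} (k : R) : 0 < k -> ln k <= -6 ->
  (fun t => F1 k t / t) @ 0^' --> (0 : R).
Proof.
move=> k0 hL; apply/cvgrPdist_le => e e0.
apply: test0 => //.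
set N := 4 / e.
have N0 : 0 < N by rewrite /N divr_gt0.
set c := `|ln N| + 1.
have c0 : 0 < c by rewrite /c; have := normr_ge0 (ln N); lra.
have d0 : 0 < Num.min k (e / (4 * c)) by rewrite lt_min k0 /= divr_gt0 // mulr_gt0.
exists (Num.min k (e / (4 * c))) => // t tn0.
rewrite lt_min => /andP [tk te].
have tp : 0 < `|t| by rewrite normr_gt0.
have F0 : 0 <= F1 k t by rewrite F1_gg //; apply: gg_ge0 => //.
have Fl := F1_le_gd k t k0 hL.
rewrite sub0r normrN normrM normfV (ger0_norm F0).
rewrite ler_pdivrMr //.
have gdb : gd k `|t| <= e.
  rewrite /gd (negbTE (lt0r_neq0 tp)) tk /hd.
  have lt := lnk_le _ _ hL tp (ltW tk).
  have P := plnp _ _ tp N0.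
  have Ninv : N^-1 = e / 4 by rewrite /N invf_div.
  have lnN := nrm_bounds (ln N).
  have tc : `|t| * c <= e / 4.
    have : `|t| * c <= e / (4 * c) * c by apply: ler_wpM2r; lra.
    have cn : c != 0 by apply: lt0r_neq0.
    have -> : e / (4 * c) * c = e / 4 by field; rewrite cn.
    done.
  rewrite /c in tc. nra.
have := ler_wpM2r (ltW tp) gdb. lra.
Qed.

Lemma F1_limoo {R : realType} (k : R) : 0 < k -> ln k <= -6 ->
  (fun t => F1 k t / t) @ +oo --> +oo.
Proof.
move=> k0 hL; apply/cvgryPge => A; apply: testoo.
exists (Num.max k `|A|) => t; rewrite gt_max => /andP [tk tA].
have tp : 0 < t by exact: lt_trans tk.
rewrite ler_pdivlMr // F1_gg // (gtr0_norm tp) /gg (negbTE (lt0r_neq0 tp)).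
rewrite ltNge (ltW tk) /= /qq.
have ha := aa_ge _ hL.
have [_ An] := nrm_bounds A.
have : 0 <= (aa k - 1) * t^+2 by apply: mulr_ge0; [lra | exact: sqr_ge0].
nra.
Qed.

Lemma F1_convex {R : realType} (k : R) : 0 < k -> ln k <= -6 -> convexR (F1 k).
Proof.
move=> k0 hL x y l l0 l1.
set P := l * x + (1 - l) * y.
have S1 := supp k P x k0 hL. have S2 := supp k P y k0 hL.
have T1 := ler_wpM2l l0 S1.
have T2 : (1 - l) * (F1 k P + sl k P * (y - P)) <= (1 - l) * F1 k y by apply: ler_wpM2l => //; lra.
have E : l * (F1 k P + sl k P * (x - P)) + (1 - l) * (F1 k P + sl k P * (y - P)) = F1 k P.
  by rewrite /P; ring.
lra.
Qed.

Lemma F1_N {R : realType} (k : R) : 0 < k -> ln k <= -6 -> N_function (F1 k).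
Proof.
move=> k0 hL; split; first exact: F1_cont.
split; first by move=> t; rewrite F1_gg //; apply: gg_ge0.
split; first exact: F1_convex.
split; first by move=> t; rewrite !F1_gg // normrN.
split.
  move=> t; split; last by move=> ->; rewrite /F1 eqxx.
  rewrite F1_gg // => h; apply/eqP; rewrite -normr_eq0; apply/negPn/negP => hn.
  have tp : 0 < `|t| by rewrite lt_neqAle eq_sym hn normr_ge0.
  by have := gg_gt0 _ _ k0 hL tp; rewrite h ltxx.
split; [exact: F1_lim0 | exact: F1_limoo].
Qed.

Lemma F1_D2 {R : realType} (k : R) : 0 < k -> ln k <= -6 -> Delta2 (F1 k).
Proof.
move=> k0 hL; exists 5; split => // t t0.
rewrite !F1_gg // (ger0_norm t0) ger0_norm; last by lra.
have [te|tn0] := eqVneq t 0.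
  by rewrite te mulr0 /gg eqxx mulr0.
have tp : 0 < t by rewrite lt_neqAle eq_sym tn0 t0.
have t2p : 0 < 2 * t by lra.
rewrite /gg (negbTE tn0) (negbTE (lt0r_neq0 t2p)).
have ha := aa_ge _ hL.
have t2 : 0 < t^+2 by exact: exprn_gt0.
case: (ltP (2 * t) k) => h2.
- have tk : t < k by lra.
  rewrite tk /hh lnM ?posrE // ?ln_ge0 //.
  have l2 : 0 <= ln (2 : R) by apply: ln_ge0; lra.
  have lt := lnk_le _ _ hL tp (ltW tk).
  nra.
- case: (ltP t k) => tk.
  + rewrite /qq /hh.
    have lt : ln t <= ln k by apply: ln_mono => //; exact: ltW.
    have : k * t <= 2 * t * t by nra.
    have : 0 <= t ^+ 2 * (ln k - ln t) by apply: mulr_ge0; lra.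
    rewrite /aa; nra.
  + rewrite /qq. have : 0 <= aa k * t^+2 by nra. nra.
Qed.

Lemma nabla {R : realType} (k u : R) : 0 < k -> ln k <= -6 -> 0 <= u -> 8 * gg k u <= gg k (4 * u).
Proof.
move=> k0 hL u0.
have [ue|un0] := eqVneq u 0.
  by rewrite ue mulr0 /gg eqxx mulr0.
have up : 0 < u by rewrite lt_neqAle eq_sym un0 u0.
have u4p : 0 < 4 * u by lra.
rewrite /gg (negbTE un0) (negbTE (lt0r_neq0 u4p)).
have ha := aa_ge _ hL.
have u2 : 0 < u^+2 by exact: exprn_gt0.
have l4 : ln (4 : R) <= 3 by have := ln_le_sub1 (4 : R) (ltac:(lra)); lra.
case: (ltP (4 * u) k) => h4.
- have uk : u < k by lra.
  rewrite uk /hh lnM ?posrE //.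
  have lt := lnk_le _ _ hL up (ltW uk).
  nra.
- case: (ltP u k) => uk.
  + rewrite /qq /hh /aa.
    have L1 : ln k <= ln 4 + ln u by rewrite -lnM ?posrE //; apply: ln_mono.
    have L2 : k * k <= 4 * u * k by nra.
    have L3 : 0 <= u ^+ 2 * (ln u - ln k + 3) by apply: mulr_ge0; [exact: ltW | lra].
    nra.
  + rewrite /qq. have : u^+2 <= aa k * u^+2 by nra. nra.
Qed.

Lemma gg_lower {R : realType} (k t : R) : 0 < k -> ln k <= -6 -> 0 <= t -> aa k * (t^+2 - k^+2) <= gg k t.
Proof.
move=> k0 hL t0; have ha := aa_ge _ hL.
have G := gg_ge0 k0 hL t0.
case: (ltP t k) => tk.
- have : aa k * (t^+2 - k^+2) <= 0 by apply: mulr_ge0_le0; nra. lra.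
- have tn0 : t != 0 by apply: lt0r_neq0; exact: lt_le_trans tk.
  rewrite /gg (negbTE tn0) ltNge tk /= /qq. nra.
Qed.

Lemma conj_D2 {R : realType} (k : R) : 0 < k -> ln k <= -6 -> Delta2 (conjugate (F1 k)).
Proof.
move=> k0 hL; exists 8; split => // s s0.
have ha := aa_ge _ hL.
have Fg (t : R) : 0 <= t -> F1 k t = gg k t by move=> t0; rewrite F1_gg // ger0_norm.
have hub : has_ubound [set s * t - F1 k t | t in [set t : R | 0 <= t]].
  exists (s^+2 / 4 + aa k * k^+2) => z [t /= t0 <-].
  rewrite Fg //. have := gg_lower _ _ k0 hL t0.
  have : 0 <= (t - s/2)^+2 by exact: sqr_ge0.
  have : t^+2 <= aa k * t^+2 by have := sqr_ge0 t; nra.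
  nra.
rewrite /conjugate; apply: ge_sup.
  by exists (2 * s * 0 - F1 k 0); exists 0 => //=.
move=> z [t /= t0 <-].
set u := t / 4.
have u0 : 0 <= u by rewrite /u; lra.
have tu : t = 4 * u by rewrite /u; field.
have Hn := nabla _ _ k0 hL u0.
have Hs := ub_le_sup hub (ltac:(by exists u)) : s * u - F1 k u <= _.
rewrite !Fg // in Hs *.
rewrite tu. nra.
Qed.

Theorem proposition3p1 (R : realType) :
  exists kappa0 : R, 0 < kappa0 /\
    forall kappa : R, 0 < kappa -> kappa < kappa0 ->
      [/\ N_function (F1 kappa), Delta2 (F1 kappa) & Delta2 (conjugate (F1 kappa))].
Proof.
exists (expR (-6)); split; first exact: expR_gt0.
move=> k k0 kl.
have hL : ln k <= -6.
  have : ln k < ln (expR (-6)) by rewrite ltr_ln ?posrE // expR_gt0.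
  rewrite expRK => h; exact: ltW.
split; [exact: F1_N | exact: F1_D2 | exact: conj_D2].
Qed.
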